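(* Let $G$ be a connected graph with $12$ vertices. Suppose one of the following holds: (1) $6\le \Delta(G)\le 8$ and $e(G)=12+k$ for some $1\le k\le 8$; (2) $\Delta(G)=9$ and $e(G)=12+k$ for some $1\le k\le 6$; (3) $\Delta(G)=10$ and $e(G)=12+k$ for some $1\le k\le 3$. Then $\frac{q(G)}{R(G)}<\frac{12}{\sqrt{11}}$.
   Context: All graphs are finite and simple; $e(G)$ is the number of edges and $\Delta(G)$ the maximum degree. For a vertex $u$, $d(u)$ is its degree. The Randić index is $R(G)=\sum_{\{u,v\}\in E(G)} \frac{1}{\sqrt{d(u)d(v)}}$. The signless Laplacian is $Q=D+A$ ($D$ the diagonal degree matrix, $A$ the adjacency matrix), and $q(G)$ is its largest eigenvalue. *)

(* Defs.v *)
From HB Require Import structures.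
From mathcomp Require Import all_boot all_order all_algebra.
Set Implicit Arguments. Unset Strict Implicit. Unset Printing Implicit Defensive.
Import Order.TTheory GRing.Theory Num.Theory.

Definition simple_graph (n : nat) (g : rel 'I_n) : Prop :=
  irreflexive g /\ symmetric g.

Definition connected_graph (n : nat) (g : rel 'I_n) : Prop :=
  forall u v : 'I_n, connect g u v.

Definition deg (n : nat) (g : rel 'I_n) (u : 'I_n) : nat := #|[set v | g u v]|.

Definition max_deg (n : nat) (g : rel 'I_n) : nat := \max_(u : 'I_n) deg g u.

(* Edges as unordered pairs {u,v}, represented once by (u,v) with u < v. *)
Definition edge_set (n : nat) (g : rel 'I_n) : {set 'I_n * 'I_n} :=
  [set p | g p.1 p.2 && (p.1 < p.2)%N].

Definition num_edges (n : nat) (g : rel 'I_n) : nat := #|edge_set g|.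

Local Open Scope ring_scope.

Definition randic (R : rcfType) (n : nat) (g : rel 'I_n) : R :=
  \sum_(p in edge_set g) (Num.sqrt ((deg g p.1)%:R * (deg g p.2)%:R))^-1.

Definition signless_laplacian (R : rcfType) (n : nat) (g : rel 'I_n) : 'M[R]_n :=
  \matrix_(i, j) ((i == j)%:R * (deg g i)%:R + (g i j)%:R).

Definition is_q_index (R : rcfType) (n : nat) (g : rel 'I_n) (q : R) : Prop :=
  eigenvalue (signless_laplacian R g) q /\
  (forall a : R, eigenvalue (signless_laplacian R g) a -> a <= q).

(* Main.v *)
From HB Require Import structures.
From mathcomp Require Import all_boot all_order all_algebra.
From mathcomp Require Import ring lra.
Import Order.TTheory GRing.Theory Num.Theory.
Local Open Scope ring_scope.
Require Import Defs.
From mathcomp Require Import zify.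
Lemma dcount (n : nat) (g : rel 'I_n) (V : nmodType) (h : 'I_n -> V) :
  irreflexive g -> symmetric g ->
  \sum_(p in edge_set g) (h p.1 + h p.2) = \sum_u h u *+ deg g u.
Proof.
move=> irr sym.
have -> : \sum_u h u *+ deg g u = \sum_(p | g p.1 p.2) h p.1.
  rewrite (eq_bigr (fun u => \sum_(v | g u v) h u)); last first.
    by move=> u _; rewrite /deg -sumr_const; apply: eq_bigl => v; rewrite inE.
  by rewrite pair_big_dep.
rewrite big_split /= [RHS](bigID (fun p : 'I_n * 'I_n => (p.1 < p.2)%N)) /=.
congr (_ + _).
  by apply: eq_bigl => p; rewrite inE.
pose sw := fun p : 'I_n * 'I_n => (p.2, p.1).
have swK : involutive sw by case.
rewrite (reindex_inj (inv_inj swK)) /=.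
apply: eq_bigl => -[a b] /=; rewrite inE /= (sym b a).
case gab: (g a b) => //=.
have : a != b by apply: contraTneq gab => ->; rewrite irr.
rewrite neq_ltn => /orP[] H.
  by rewrite H /= ltnNge ltnW.
by rewrite H -leqNgt ltnW.
Qed.
Lemma deg_pos (g : rel 'I_12) : connected_graph g -> forall u, (0 < deg g u)%N.
Proof.
move=> cg u.
have [v uv] : exists v : 'I_12, u != v.
  case: (eqVneq u ord0) => [->|h]; last by exists ord0.
  by exists (inord 1); apply/eqP => /(congr1 val); rewrite /= inordK.
case/connectP: (cg u v) => -[|y p] /=; first by move=> _ E; rewrite E eqxx in uv.
case/andP => guy _ _.
by apply/card_gt0P; exists y; rewrite inE.
Qed.

Lemma handshake (n : nat) (g : rel 'I_n) : irreflexive g -> symmetric g ->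
  (\sum_u deg g u = 2 * num_edges g)%N.
Proof.
move=> irr sym.
have := @dcount _ g nat (fun _ => 1%N) irr sym.
move=> H.
have -> : (\sum_u deg g u = \sum_u (1%N *+ deg g u)%R)%N.
  by apply: eq_bigr => u _; rewrite natn.
rewrite -H sum_nat_const /num_edges mulnC.
done.
Qed.

Lemma deg_le_max (n : nat) (g : rel 'I_n) u : (deg g u <= max_deg g)%N.
Proof. rewrite /max_deg; exact: (@leq_bigmax _ (fun u => deg g u) u). Qed.
Lemma key (R : rcfType) (x y : R) : 1 <= x <= 10%:R -> 1 <= y <= 10%:R ->
  7%:R / 25%:R * (x^-1 + y^-1) <= (Num.sqrt (x * y))^-1.
Proof.
move=> /andP[x1 x10] /andP[y1 y10].
have x0 : 0 < x by lra.
have y0 : 0 < y by lra.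
set s := Num.sqrt (x * y).
have s0 : 0 < s by rewrite sqrtr_gt0 mulr_gt0.
have ss : s ^+ 2 = x * y by rewrite sqr_sqrtr // mulr_ge0 // ltW.
have h1 : 0 <= (10%:R * x - y) * (10%:R * y - x) by apply: mulr_ge0; lra.
have h2 : 0 < x * y by rewrite mulr_gt0.
have h3 : 7%:R * (x + y) <= 25%:R * s by nra.
have -> : x^-1 + y^-1 = (x + y) / s ^+ 2.
  by rewrite ss; field; apply/andP; split; apply: lt0r_neq0.
have -> : 7%:R / 25%:R * ((x + y) / s ^+ 2) = (7%:R * (x + y) / (25%:R * s)) * s^-1.
  by field; apply: lt0r_neq0.
rewrite -[leRHS]mul1r; apply: ler_wpM2r; first by rewrite invr_ge0 ltW.
by rewrite ler_pdivrMr ?mul1r // mulr_gt0.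
Qed.

Lemma randic_lb (R : rcfType) (g : rel 'I_12) : simple_graph g -> connected_graph g ->
  (max_deg g <= 10)%N -> 84%:R / 25%:R <= randic R g.
Proof.
move=> [irr sym] cg mx.
have dp := deg_pos g cg.
have dle u : ((deg g u)%:R : R) <= 10%:R.
  by rewrite ler_nat; exact: (leq_trans (deg_le_max _ g u) mx).
have dge u : (1 : R) <= (deg g u)%:R by rewrite ler1n.
rewrite /randic.
apply: (@le_trans _ _ (\sum_(p in edge_set g)
   7%:R / 25%:R * (((deg g p.1)%:R : R)^-1 + ((deg g p.2)%:R)^-1))).
  rewrite -mulr_sumr (@dcount _ g _ (fun u => ((deg g u)%:R : R)^-1) irr sym).
  have -> : \sum_u ((deg g u)%:R : R)^-1 *+ deg g u = 12%:R.
    rewrite (eq_bigr (fun _ => 1)); first by rewrite sumr_const card_ord.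
    move=> u _; rewrite -[_ *+ deg g u]mulr_natr mulVf //.
    by rewrite pnatr_eq0 -lt0n.
  lra.
apply: ler_sum => p _; apply: key; apply/andP; split => //.
Qed.
Lemma arith (d S D m : nat) : (1 <= d <= D)%N -> (S <= D * d)%N -> (S + d <= 2 * m)%N ->
  [\/ (D <= 8 /\ m <= 20)%N, (D = 9 /\ m <= 18)%N | (D = 10 /\ m <= 15)%N] ->
  (d * d + S <= 12 * d)%N.
Proof.
move=> /andP[d1 dD] h1 h2 [[hD hm]|[hD hm]|[hD hm]].
- have : (d <= 8)%N by lia.
  do 9 (case: d d1 dD h1 h2 => [|d] d1 dD h1 h2; first lia). lia.
- subst D; have : (d <= 9)%N by lia.
  do 10 (case: d d1 dD h1 h2 => [|d] d1 dD h1 h2; first lia). lia.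
- subst D; have : (d <= 10)%N by lia.
  do 11 (case: d d1 dD h1 h2 => [|d] d1 dD h1 h2; first lia). lia.
Qed.
Lemma das (R : rcfType) (g : rel 'I_12) (q : R) :
  (forall u, (0 < deg g u)%N) ->
  eigenvalue (signless_laplacian R g) q ->
  exists j, q * (deg g j)%:R <=
     ((deg g j * deg g j + \sum_i deg g i * g i j)%N)%:R.
Proof.
move=> dp /eigenvalueP [v Hv nz].
set d := fun i => ((deg g i)%:R : R).
have d0 i : 0 < d i by rewrite /d ltr0n.
set w := fun i => `|v 0 i| / d i.
have wd i : `|v 0 i| = w i * d i by rewrite /w divfK // lt0r_neq0.
case: (@arg_maxP _ _ 'I_12 ord0 xpredT w isT) => j _ Hj.
exists j.
have [i0 vi] : exists i, v 0 i != 0.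
  apply/existsP; apply: contraNT nz => /existsPn H; apply/eqP/rowP => i.
  by rewrite mxE; apply/eqP; move: (H i); rewrite negbK.
have wj0 : 0 < w j.
  apply: (lt_le_trans _ (Hj i0 isT)).
  by rewrite /w divr_gt0 // normr_gt0.
have E : \sum_i v 0 i * signless_laplacian R g i j = q * v 0 j.
  by move: (congr1 (fun M : 'rV_12 => M 0 j) Hv); rewrite !mxE.
have Qge k : 0 <= signless_laplacian R g k j.
  by rewrite /signless_laplacian mxE addr_ge0 // mulr_ge0.
have T : \sum_i d i * signless_laplacian R g i j =
   ((deg g j * deg g j + \sum_i deg g i * g i j)%N)%:R.
  rewrite natrD natrM natr_sum.
  rewrite /signless_laplacian (eq_bigr (fun k => d k * ((k == j)%:R * d k + (g k j)%:R) )); last by move=> k _; rewrite mxE.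
  under eq_bigr => k _ do rewrite mulrDr.
  rewrite big_split /=; congr (_ + _).
    rewrite (bigD1 j) //= big1 ?addr0 => [|k /negbTE ->]; last by rewrite !mul0r mulr0.
    by rewrite eqxx mul1r.
  by apply: eq_bigr => k _; rewrite natrM.
rewrite -T -(ler_pM2l wj0).
apply: (@le_trans _ _ (`|q * v 0 j|)).
  rewrite normrM wd mulrCA !mulrA -/(d j); apply: ler_wpM2r; first exact: ltW.
  apply: ler_wpM2r; first by rewrite invr_ge0 ltW.
  by apply: ler_wpM2r; [exact: normr_ge0 | exact: ler_norm].
rewrite -E mulr_sumr.
apply: (le_trans (ler_norm_sum _ _ _)).
apply: ler_sum => k _.
rewrite normrM (ger0_norm (Qge k)) mulrA.
apply: ler_wpM2r => //.
rewrite wd; apply: ler_wpM2r; first exact: ltW.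
exact: Hj.
Qed.

Lemma Sbound1 (g : rel 'I_12) j : symmetric g ->
  (\sum_i deg g i * g i j <= max_deg g * deg g j)%N.
Proof.
move=> sym.
apply: (@leq_trans (\sum_i max_deg g * g i j)%N).
  by apply: leq_sum => i _; rewrite leq_mul2r deg_le_max orbT.
rewrite -big_distrr /= leq_mul2l; apply/orP; right.
rewrite /deg -sum1_card; apply: eq_leq; rewrite [RHS]big_mkcond /=.
apply: eq_bigr => i _; rewrite inE sym.
by case: (g i j).
Qed.

Lemma Sbound2 (g : rel 'I_12) j : irreflexive g -> symmetric g ->
  (\sum_i deg g i * g i j + deg g j <= 2 * num_edges g)%N.
Proof.
move=> irr sym.
rewrite -handshake // (bigD1 j) //= irr muln0 add0n [X in (_ <= X)%N](bigD1 j) //= addnC leq_add2l.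
apply: leq_sum => i _.
by case: (g i j); rewrite ?muln1 ?muln0.
Qed.

Theorem lemma3p6 (R : rcfType) (g : rel 'I_12) (q : R) :
  simple_graph g -> connected_graph g ->
  [\/ ((6 <= max_deg g <= 8)%N /\ exists2 k, (1 <= k <= 8)%N & num_edges g = (12 + k)%N),
      (max_deg g = 9%N /\ exists2 k, (1 <= k <= 6)%N & num_edges g = (12 + k)%N)
    | (max_deg g = 10%N /\ exists2 k, (1 <= k <= 3)%N & num_edges g = (12 + k)%N)] ->
  is_q_index g q ->
  q / randic R g < 12%:R / Num.sqrt 11%:R.
Proof.
move=> sg cg cases [Hq _].
have [irr sym] := sg.
have cases' : [\/ (max_deg g <= 8 /\ num_edges g <= 20)%N,
    (max_deg g = 9 /\ num_edges g <= 18)%N | (max_deg g = 10 /\ num_edges g <= 15)%N].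
  case: cases => [[/andP[_ h] [k /andP[_ hk] ->]]|[h [k /andP[_ hk] ->]]|[h [k /andP[_ hk] ->]]].
  - by apply: Or31; split => //; lia.
  - by apply: Or32; split => //; lia.
  - by apply: Or33; split => //; lia.
have mx10 : (max_deg g <= 10)%N by case: cases' => -[h _]; lia.
have RL := randic_lb R g sg cg mx10.
have dp := deg_pos g cg.
have [j Hj] := das R g q dp Hq.
have Hn : (deg g j * deg g j + \sum_i deg g i * g i j <= 12 * deg g j)%N.
  apply: (arith _ _ (max_deg g) (num_edges g)) => //.
  - by rewrite dp deg_le_max.
  - exact: Sbound1.
  - exact: Sbound2.
have q12 : q <= 12%:R.
  have dj : (0 : R) < (deg g j)%:R by rewrite ltr0n.
  rewrite -(ler_pM2r dj); apply: (le_trans Hj).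
  by rewrite -natrM ler_nat.
set r := randic R g in RL *.
have r0 : 0 < r by apply: lt_le_trans RL; lra.
set s := Num.sqrt (11%:R : R).
have s0 : 0 < s by rewrite sqrtr_gt0 ltr0n.
have ss : s ^+ 2 = 11%:R by rewrite sqr_sqrtr // ler0n.
have sr : s < r by apply: lt_le_trans RL; nra.
apply: (@le_lt_trans _ _ (12%:R / r)).
  by apply: ler_wpM2r; [rewrite invr_ge0 ltW | ].
rewrite ltr_pM2l ?ltr0n // ltf_pV2 ?posrE //.
Qed.
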